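(* Let $x_0\in\mathbb{R}^d$, let $\beta\in\mathbb{R}$, let $(\alpha_k)_{k\ge 0}$ be nonzero step sizes, and let $\xi_0,\xi_1,\dots$ be a fixed sequence of samples. Consider the momentum method $$m_0=0,\qquad m_{k+1}=\beta m_k+(1-\beta)\nabla f(x_k,\xi_k),\qquad x_{k+1}=x_k-\alpha_k m_{k+1}\quad(k\ge 0),$$ and the iterate-averaging method $$x'_0=z_0=x_0,\qquad z_{k+1}=z_k-\eta_k\nabla f(x'_k,\xi_k),\qquad x'_{k+1}=(1-c_{k+1})x'_k+c_{k+1}z_{k+1}\quad(k\ge 0).$$ Suppose $c_1\in(0,1)$, that for all $k\ge 1$ $$c_{k+1}=\beta\,\frac{\alpha_k}{\alpha_{k-1}}\,\frac{c_k}{1-c_k},$$ and that for all $k\ge 0$ $$\eta_k=\frac{\alpha_k}{c_{k+1}}(1-\beta),$$ where all these quantities are assumed well defined (i.e. $c_k\notin\{0,1\}$ for all $k\ge1$). Then $x_k=x'_k$ for all $k\ge 0$.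
   Context: $\nabla f(x,\xi)$ denotes the (sub)gradient of $f(\cdot,\xi)$ at $x$ returned for sample $\xi$; both methods use the same samples $\xi_k$ at step $k$. No projection is involved (the constraint set is all of $\mathbb{R}^d$). *)

(* Defs.v *)
From mathcomp Require Import all_boot all_order all_algebra.
Set Implicit Arguments. Unset Strict Implicit. Unset Printing Implicit Defensive.
Import Order.TTheory GRing.Theory Num.Theory.
Local Open Scope ring_scope.

(* [grad x s] is the (sub)gradient of f(., s) at x returned for sample s:
   an arbitrary oracle.  [xi k] is the fixed sample used at step k. *)

Fixpoint momentum (R : realFieldType) (d : nat) (Xi : Type)
    (grad : 'rV[R]_d -> Xi -> 'rV[R]_d) (xi : nat -> Xi)
    (alpha : nat -> R) (beta : R) (x0 : 'rV[R]_d) (k : nat)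
    : 'rV[R]_d * 'rV[R]_d :=
  match k with
  | 0 => (x0, 0)
  | k'.+1 =>
      let: (x, m) := momentum grad xi alpha beta x0 k' in
      let m' := beta *: m + (1 - beta) *: grad x (xi k') in
      (x - alpha k' *: m', m')
  end.

Fixpoint averaging (R : realFieldType) (d : nat) (Xi : Type)
    (grad : 'rV[R]_d -> Xi -> 'rV[R]_d) (xi : nat -> Xi)
    (eta c : nat -> R) (x0 : 'rV[R]_d) (k : nat)
    : 'rV[R]_d * 'rV[R]_d :=
  match k with
  | 0 => (x0, x0)
  | k'.+1 =>
      let: (x', z) := averaging grad xi eta c x0 k' in
      let z' := z - eta k' *: grad x' (xi k') in
      ((1 - c k'.+1) *: x' + c k'.+1 *: z', z')
  end.

(* Main.v *)
Require Import Defs.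
From mathcomp Require Import all_boot all_order all_algebra.
From mathcomp Require Import ring lra.
Import Order.TTheory GRing.Theory Num.Theory.
Local Open Scope ring_scope.

Theorem theorem1 (R : realFieldType) (d : nat) (Xi : Type)
    (grad : 'rV[R]_d -> Xi -> 'rV[R]_d) (xi : nat -> Xi)
    (x0 : 'rV[R]_d) (beta : R) (alpha eta c : nat -> R)
    (halpha : forall k, alpha k != 0)
    (hc_def : forall k, (1 <= k)%N -> c k != 0 /\ c k != 1)
    (hc1 : 0 < c 1 < 1)
    (hc_rec : forall k, (1 <= k)%N ->
       c k.+1 = beta * (alpha k / alpha k.-1) * (c k / (1 - c k)))
    (heta : forall k, eta k = alpha k / c k.+1 * (1 - beta)) :
  forall k, (momentum grad xi alpha beta x0 k).1
            = (averaging grad xi eta c x0 k).1.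
Proof.
pose gamma k := alpha k.-1 * (1 - c k) / c k.
suff H : forall k, (averaging grad xi eta c x0 k).1 = (momentum grad xi alpha beta x0 k).1
  /\ (averaging grad xi eta c x0 k).2 = (momentum grad xi alpha beta x0 k).1
        - gamma k *: (momentum grad xi alpha beta x0 k).2
  /\ (k = 0%N -> (momentum grad xi alpha beta x0 k).2 = 0).
  by move=> k; case: (H k) => ->.
elim=> [|k [IH1 [IH2 IH3]]] /=.
  by rewrite scaler0 subr0.
move: IH1 IH2 IH3.
case: (momentum grad xi alpha beta x0 k) => x m.
case: (averaging grad xi eta c x0 k) => x' z /= -> -> IH3.
have [ck1 ck1'] := hc_def k.+1 isT.
have F1 : gamma k *: m = (alpha k * beta / c k.+1) *: m.
  case: k IH3 ck1 ck1' => [|k] IH3 ck1 ck1'; first by rewrite IH3 // !scaler0.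
  congr (_ *: _).
  have [ck ck'] := hc_def k.+1 isT.
  have ck'' : 1 - c k.+1 != 0 by rewrite subr_eq0 eq_sym.
  rewrite /gamma hc_rec //= in ck1 *.
  have hb : beta != 0 by apply: contraNneq ck1 => ->; rewrite !mul0r.
  by field; rewrite ck'' ck hb !halpha.
have F3 : gamma k.+1 = alpha k / c k.+1 - alpha k.
  by rewrite /gamma /=; field.
split; last split; last by [].
- apply/matrixP => i j. 
  have := congr1 (fun v : 'rV[R]_d => v i j) F1.
  rewrite !mxE heta => F1j.
  by rewrite F1j; field.
- apply/matrixP => i j; have := congr1 (fun v : 'rV[R]_d => v i j) F1.
  rewrite !mxE heta F3 => F1j.
  by rewrite F1j; field.
Qed.
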